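(* Let $T>0$ and let $\mathcal F(t,r)$ be continuous on $[0,T]\times(0,\infty)$ with $|\mathcal F(t,r)|\le\frac{C\varepsilon^2}{1+r^2+t^2}$. There is $c>0$ such that for any $\delta\in(0,1)$ with $\varepsilon\le c\delta^2$ and any fixed $\ell>0$: if $(\theta(t),a(t))$, $t\in[0,T]$, $a(t)>0$, solves $\dot\theta=-\lambda\mathcal F(t,\tilde R)\partial_a\tilde R$, $\dot a=\lambda\mathcal F(t,\tilde R)\partial_\theta\tilde R$ with $\tilde R=R(\theta+at,a,\ell)$ and $(\theta(0),a(0),\ell)\in\mathcal D(\delta)$, then $(\theta(t),a(t),\ell)\in\mathcal D(\delta/2)$ for all $t\in[0,T]$.
   Context: Fix $m>0$, $\lambda>0$. For $a,\ell>0$: $\kappa=(1+4a^2\ell/m^2)^{-1/2}$, $p=\frac{m}{2a^2\kappa}$; $G_\kappa(x)=\sqrt{x^2-1}-\kappa\ln(x+\sqrt{x^2-1})$ on $[1,\infty)$, $H_\kappa=G_\kappa^{-1}$; $R(\theta,a,\ell)=pH_\kappa(|\theta|/p)-p\kappa$; $\partial_\theta\tilde R,\partial_a\tilde R$ are the partial derivatives of $(\theta,a)\mapsto R(\theta+at,a,\ell)$. $\mathcal D(\delta)=\{(\theta,a,\ell)\in\mathbb R\times(0,\infty)^2: a\langle\ell\rangle^{1/2}\ge\delta\}$, $\langle x\rangle=(2+|x|^2)^{1/2}$. *)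

(* Defs.v *)
From Stdlib Require Import Reals ClassicalEpsilon.
From Coquelicot Require Import Coquelicot.
Open Scope R_scope.

Definition kappa (m a l : R) : R := / sqrt (1 + 4 * a ^ 2 * l / m ^ 2).

Definition pp (m a l : R) : R := m / (2 * a ^ 2 * kappa m a l).

Definition Gk (k x : R) : R := sqrt (x ^ 2 - 1) - k * ln (x + sqrt (x ^ 2 - 1)).

(* H_kappa = G_kappa^{-1}: the (unique) x >= 1 with G_kappa x = y. *)
Definition Hk (k y : R) : R :=
  epsilon (inhabits 1) (fun x => 1 <= x /\ Gk k x = y).

Definition Rfun (m th a l : R) : R :=
  pp m a l * Hk (kappa m a l) (Rabs th / pp m a l) - pp m a l * kappa m a l.

Definition Rt (m t l th a : R) : R := Rfun m (th + a * t) a l.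

Definition dth_Rt (m t l th a : R) : R := Derive (fun th' => Rt m t l th' a) th.
Definition da_Rt (m t l th a : R) : R := Derive (fun a' => Rt m t l th a') a.

Definition jap (x : R) : R := sqrt (2 + x ^ 2).

Definition inD (delta th a l : R) : Prop :=
  0 < a /\ 0 < l /\ a * sqrt (jap l) >= delta.

Definition cont_on_strip (T : R) (F : R -> R -> R) : Prop :=
  forall t r, 0 <= t <= T -> 0 < r ->
    filterlim (fun z : R * R => F (fst z) (snd z))
      (within (fun z : R * R => 0 <= fst z <= T /\ 0 < snd z) (locally (t, r)))
      (locally (F t r)).

Definition cont_on_interval (T : R) (f : R -> R) : Prop :=
  forall t, 0 <= t <= T ->
    filterlim f (within (fun s => 0 <= s <= T) (locally t)) (locally (f t)).

(* Main.v *)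
Require Import Defs.
From Stdlib Require Import Reals Lra Psatz ClassicalEpsilon.
From Coquelicot Require Import Coquelicot.
Open Scope R_scope.

Definition Sx (x : R) := sqrt (x ^ 2 - 1).
Definition Lx (x : R) := ln (x + Sx x).

Lemma Gk_eq k x : Gk k x = Sx x - k * Lx x.
Proof. reflexivity. Qed.

Lemma Sx_sq x : 1 <= x -> Sx x ^ 2 = x ^ 2 - 1.
Proof. intros; unfold Sx. rewrite pow2_sqrt; nra. Qed.

Lemma Sx_ge0 x : 0 <= Sx x.
Proof. apply sqrt_pos. Qed.

Lemma Sx_pos x : 1 < x -> 0 < Sx x.
Proof. intros; unfold Sx; apply sqrt_lt_R0; nra. Qed.

Lemma Sx_1 : Sx 1 = 0.
Proof. unfold Sx. replace (1^2-1) with 0 by ring. apply sqrt_0. Qed.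

Lemma Lx_1 : Lx 1 = 0.
Proof. unfold Lx. rewrite Sx_1, Rplus_0_r. apply ln_1. Qed.

Lemma Sx_lt x : 1 <= x -> Sx x < x.
Proof. intros. assert (h := Sx_sq x H). assert (h2 := Sx_ge0 x). nra. Qed.

Lemma Lx_ge0 x : 1 <= x -> 0 <= Lx x.
Proof. intros. unfold Lx. rewrite <- ln_1. apply ln_le; try lra. assert (h2 := Sx_ge0 x). lra. Qed.

Lemma is_derive_Sx x : 1 < x -> is_derive Sx x (x / Sx x).
Proof.
  intros. unfold Sx. auto_derive. nra.
  assert (h := Sx_pos x H). unfold Sx in h.
  replace (x * (x * 1) + - (1)) with (x^2-1) by ring. field. lra.
Qed.

Lemma is_derive_Lx x : 1 < x -> is_derive Lx x (/ Sx x).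
Proof.
  intros. unfold Lx. 
  assert (h := Sx_pos x H).
  assert (Hd : is_derive (fun x => ln (x + Sx x)) x ((1 + x / Sx x) * / (x + Sx x))).
  { apply (is_derive_comp ln (fun x => x + Sx x) x (/ (x + Sx x)) (1 + x / Sx x)).
    - auto_derive. lra. field. lra.
    - apply (is_derive_plus (fun x => x) Sx x 1 (x / Sx x)).
      auto_derive; auto. now apply is_derive_Sx. }
  replace (/ Sx x) with ((1 + x / Sx x) * / (x + Sx x)). exact Hd.
  field. lra.
Qed.

Lemma cont_Sx x : continuous Sx x.
Proof.
  unfold Sx. apply continuous_sqrt_comp.
  apply (continuous_minus (fun x => x^2) (fun _ => 1)).
  apply ex_derive_continuous. auto_derive. auto.
  apply continuous_const.
Qed.

Lemma cont_Lx x : 1 <= x -> continuous Lx x.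
Proof.
  intros. unfold Lx.
  apply (continuous_comp (fun x => x + Sx x) ln).
  apply (continuous_plus (fun x => x) Sx). apply continuous_id. apply cont_Sx.
  apply continuous_ln. assert (h := Sx_ge0 x). lra.
Qed.

Lemma cont_Gk k x : 1 <= x -> continuous (Gk k) x.
Proof.
  intros. apply (continuous_ext (fun x => Sx x - k * Lx x)). reflexivity.
  apply (continuous_minus Sx (fun x => k * Lx x)). apply cont_Sx.
  apply (continuous_scal_r k Lx). now apply cont_Lx.
Qed.

Lemma is_derive_Gk k x : 1 < x -> is_derive (Gk k) x ((x - k) / Sx x).
Proof.
  intros. assert (h := Sx_pos x H).
  apply (is_derive_ext (fun x => Sx x - k * Lx x)). reflexivity.
  replace ((x - k) / Sx x) with (x / Sx x - k * / Sx x) by (field; lra).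
  apply (is_derive_minus Sx (fun x => k * Lx x)). now apply is_derive_Sx.
  apply (is_derive_scal Lx). now apply is_derive_Lx.
Qed.

Lemma G3 k x0 x1 : 0 < k < 1 -> 1 <= x0 <= x1 ->
  (1 - k) * (x1 - x0) <= Gk k x1 - Gk k x0.
Proof.
  intros Hk Hx. destruct (Req_dec x0 x1) as [e|ne]. subst. lra.
  destruct (MVT_gen (fun x => Gk k x - (1 - k) * x) x0 x1
     (fun x => Rmax 0 ((x - k) / Sx x - (1 - k)))) as [c [Hc Hm]].
  - intros x Hx'. rewrite Rmin_left in Hx' by lra. rewrite Rmax_right in Hx' by lra.
    assert (h := Sx_pos x ltac:(lra)). assert (hl := Sx_lt x ltac:(lra)).
    rewrite Rmax_right.
    apply (is_derive_minus (Gk k) (fun x => (1-k) * x)). apply is_derive_Gk; lra.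
    auto_derive; auto. ring.
    assert ((1 - k) * Sx x <= x - k) by nra.
    assert ((1 - k) <= (x - k) / Sx x). apply (Rmult_le_reg_r (Sx x)). lra.
    unfold Rdiv. rewrite Rmult_assoc, Rinv_l by lra. lra. lra.
  - intros x Hx'. rewrite Rmin_left in Hx' by lra. rewrite Rmax_right in Hx' by lra.
    apply continuity_pt_filterlim.
    apply (continuous_minus (Gk k) (fun x => (1-k) * x)). apply cont_Gk; lra.
    apply ex_derive_continuous. auto_derive; auto.
  - assert (0 <= Rmax 0 ((c - k) / Sx c - (1 - k))) by apply Rmax_l.
    nra.
Qed.

Lemma G4 k x : 0 < k < 1 -> 1 <= x -> (1 - k) * Sx x <= Gk k x.
Proof.
  intros Hk Hx. destruct (Req_dec x 1) as [e|ne]. subst. rewrite Sx_1.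
  unfold Gk. replace (1^2-1) with 0 by ring. rewrite sqrt_0, Rplus_0_r, ln_1. lra.
  destruct (MVT_gen (fun x => Gk k x - (1 - k) * Sx x) 1 x
     (fun x => Rmax 0 (k * (x - 1) / Sx x))) as [c [Hc Hm]].
  - intros y Hy. rewrite Rmin_left in Hy by lra. rewrite Rmax_right in Hy by lra.
    assert (h := Sx_pos y ltac:(lra)).
    rewrite Rmax_right.
    replace (k * (y - 1) / Sx y) with ((y - k) / Sx y - (1 - k) * (y / Sx y)) by (field; lra).
    apply (is_derive_minus (Gk k) (fun x => (1-k) * Sx x)). apply is_derive_Gk; lra.
    apply (is_derive_scal Sx). now apply is_derive_Sx.
    apply Rmult_le_pos. nra. left. now apply Rinv_0_lt_compat.
  - intros y Hy. rewrite Rmin_left in Hy by lra. rewrite Rmax_right in Hy by lra.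
    apply continuity_pt_filterlim.
    apply (continuous_minus (Gk k) (fun x => (1-k) * Sx x)). apply cont_Gk; lra.
    apply (continuous_scal_r (1-k) Sx). apply cont_Sx.
  - assert (0 <= Rmax 0 (k * (c - 1) / Sx c)) by apply Rmax_l.
    assert (Gk k 1 = 0). unfold Gk. replace (1^2-1) with 0 by ring. rewrite sqrt_0, Rplus_0_r, ln_1. lra.
    rewrite Sx_1 in Hm. nra.
Qed.

Lemma Gk_1 k : Gk k 1 = 0.
Proof. unfold Gk. replace (1^2-1) with 0 by ring. rewrite sqrt_0, Rplus_0_r, ln_1. ring. Qed.

Lemma Gk_exists k y : 0 < k < 1 -> 0 <= y -> exists x, 1 <= x /\ Gk k x = y.
Proof.
  intros Hk Hy. destruct (Req_dec y 0) as [e|ne].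
  - exists 1. split. lra. subst. apply Gk_1.
  - destruct (Ranalysis5.IVT_interv (fun x => Gk k x - y) 1 (1 + y / (1 - k) + 1)) as [z [Hz1 Hz2]].
    + intros a Ha. apply continuity_pt_filterlim.
      apply (continuous_minus (Gk k) (fun _ => y)). apply cont_Gk; lra. apply continuous_const.
    + assert (0 <= y / (1 - k)) by (apply Rdiv_le_0_compat; lra). lra.
    + rewrite Gk_1. lra.
    + assert (h := G3 k 1 (1 + y / (1 - k) + 1) Hk).
      assert (0 <= y / (1 - k)) by (apply Rdiv_le_0_compat; lra).
      rewrite Gk_1 in h.
      assert ((1 - k) * (1 + y / (1 - k) + 1 - 1) = y + (1 - k)) by (field; lra).
      assert (h' := h ltac:(lra)). lra.
    + exists z. split. lra. lra.
Qed.

Lemma Hk_spec k y : 0 < k < 1 -> 0 <= y -> 1 <= Hk k y /\ Gk k (Hk k y) = y.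
Proof.
  intros Hkk Hy. unfold Hk.
  apply (epsilon_spec (inhabits 1) (fun x => 1 <= x /\ Gk k x = y)).
  now apply Gk_exists.
Qed.

Lemma Gk_inj k x0 x1 : 0 < k < 1 -> 1 <= x0 -> 1 <= x1 -> Gk k x0 = Gk k x1 -> x0 = x1.
Proof.
  intros. destruct (Rle_dec x0 x1).
  - assert (h := G3 k x0 x1 H ltac:(lra)). nra.
  - assert (h := G3 k x1 x0 H ltac:(lra)). nra.
Qed.

Lemma Hk_0 k : 0 < k < 1 -> Hk k 0 = 1.
Proof.
  intros. destruct (Hk_spec k 0 H ltac:(lra)).
  apply (Gk_inj k); auto. lra. now rewrite Gk_1.
Qed.

Lemma G3abs k x0 x1 : 0 < k < 1 -> 1 <= x0 -> 1 <= x1 ->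
  (1 - k) * Rabs (x1 - x0) <= Rabs (Gk k x1 - Gk k x0).
Proof.
  intros. destruct (Rle_dec x0 x1).
  - assert (h := G3 k x0 x1 H ltac:(lra)).
    rewrite !Rabs_right; nra.
  - assert (h := G3 k x1 x0 H ltac:(lra)).
    rewrite (Rabs_left1 (x1 - x0)) by lra. rewrite (Rabs_left1 (Gk k x1 - Gk k x0)) by nra. nra.
Qed.

Lemma limR {T} (F : (T -> Prop) -> Prop) {FF : Filter F} (f : T -> R) c :
  filterlim f F (locally c) <-> forall eps, 0 < eps -> F (fun s => Rabs (f s - c) < eps).
Proof.
  rewrite filterlim_locally. split.
  - intros H eps He. apply (H (mkposreal eps He)).
  - intros H eps. apply H. apply cond_pos.
Qed.

Lemma Gk_shift k k0 x : Gk k x = Gk k0 x + (k0 - k) * Lx x.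
Proof. unfold Gk, Lx, Sx. ring. Qed.

Lemma Hk_bound k k0 y y0 : 0 < k < 1 -> 0 < k0 < 1 -> 0 <= y -> 0 <= y0 ->
  (1 - k) * Rabs (Hk k y - Hk k0 y0) <= Rabs (y - y0) + Rabs (k - k0) * Lx (Hk k0 y0).
Proof.
  intros. destruct (Hk_spec k y) as [h1 h2]; auto. destruct (Hk_spec k0 y0) as [h3 h4]; auto.
  assert (h := G3abs k (Hk k0 y0) (Hk k y) H h3 h1).
  rewrite h2, (Gk_shift k k0), h4 in h.
  assert (hL := Lx_ge0 _ h3).
  eapply Rle_trans. apply h.
  replace (y - (y0 + (k0 - k) * Lx (Hk k0 y0))) with ((y - y0) + (k - k0) * Lx (Hk k0 y0)) by ring.
  eapply Rle_trans. apply Rabs_triang. rewrite Rabs_mult, (Rabs_right (Lx _)) by lra. lra.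
Qed.

Lemma Hk_lim {T} (F : (T -> Prop) -> Prop) {FF : Filter F} (k y : T -> R) k0 y0 :
  0 < k0 < 1 -> 0 <= y0 -> F (fun s => 0 < k s < 1 /\ 0 <= y s) ->
  filterlim k F (locally k0) -> filterlim y F (locally y0) ->
  filterlim (fun s => Hk (k s) (y s)) F (locally (Hk k0 y0)).
Proof.
  intros Hk0 Hy0 Hev Hkl Hyl. pose proof (proj1 (limR F k k0) Hkl) as Hkl'. pose proof (proj1 (limR F y y0) Hyl) as Hyl'. clear Hkl Hyl. rename Hkl' into Hkl. rename Hyl' into Hyl.
  apply (proj2 (limR F _ _)). intros eps He.
  set (L := Lx (Hk k0 y0)).
  assert (hL : 0 <= L) by (apply Lx_ge0; apply Hk_spec; auto).
  set (eta := Rmin ((1 - k0) / 2) (eps * (1 - k0) / (4 * (1 + L)))).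
  assert (heta : 0 < eta). { apply Rmin_pos. lra. apply Rdiv_lt_0_compat; nra. }
  assert (heta1 : eta <= (1 - k0) / 2) by apply Rmin_l.
  assert (heta2 : eta <= eps * (1 - k0) / (4 * (1 + L))) by apply Rmin_r.
  generalize (Hkl eta heta) (Hyl eta heta).
  intros A B. generalize (filter_and _ _ Hev (filter_and _ _ A B)). apply filter_imp.
  intros s [[hk hy] [ha hb]].
  assert (hb' := Hk_bound (k s) k0 (y s) y0 hk Hk0 hy Hy0). fold L in hb'.
  assert (1 - k s >= (1 - k0) / 2). { apply Rabs_def2 in ha. lra. }
  assert (Rabs (k s - k0) * L <= eta * L). apply Rmult_le_compat_r; lra.
  assert (eta * (4 * (1 + L)) <= eps * (1 - k0)).
  { apply (Rmult_le_compat_r (4 * (1 + L))) in heta2. 2: lra.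
    unfold Rdiv in heta2. rewrite Rmult_assoc, Rinv_l in heta2 by lra. lra. }
  assert (0 <= Rabs (Hk (k s) (y s) - Hk k0 y0)) by apply Rabs_pos.
  nra.
Qed.

Lemma quot_derive (f : R -> R) (x l : R) :
  filterlim (fun s => (f s - f x) / (s - x)) (locally' x) (locally l) -> is_derive f x l.
Proof.
  intros H. apply is_derive_Reals. intros eps He.
  pose proof (proj1 (limR (locally' x) _ _) H eps He) as [d Hd].
  exists d. intros h hn hd. 
  assert (B : ball x d (x + h)). { change (Rabs (x + h - x) < d). now replace (x + h - x) with h by ring. }
  specialize (Hd (x + h) B ltac:(lra)).
  assert (E : (f (x + h) - f x) / (x + h - x) = (f (x + h) - f x) / h) by (f_equal; ring).
  change (Rabs ((f (x + h) - f x) / (x + h - x) - l) < eps) in Hd. now rewrite E in Hd.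
Qed.

Lemma derive_quot (f : R -> R) (x l : R) :
  is_derive f x l -> filterlim (fun s => (f s - f x) / (s - x)) (locally' x) (locally l).
Proof.
  intros H. apply is_derive_Reals in H. apply (proj2 (limR (locally' x) _ _)). intros eps He.
  destruct (H eps He) as [d Hd]. exists d. intros s B hs. change (Rabs (s - x) < d) in B.
  specialize (Hd (s - x) ltac:(lra) B). change (Rabs ((f s - f x) / (s - x) - l) < eps).
  now rewrite Rplus_minus in Hd.
Qed.

Definition slope (g : R -> R) (x0 d : R) (x : R) : R :=
  if Req_EM_T x x0 then d else (g x - g x0) / (x - x0).

Lemma slope_eq g x0 d x : g x - g x0 = slope g x0 d x * (x - x0).
Proof. unfold slope. destruct (Req_EM_T x x0). subst; ring. field. lra. Qed.

Lemma slope_lim (g : R -> R) (x0 d : R) : is_derive g x0 d -> filterlim (slope g x0 d) (locally x0) (locally d).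
Proof.
  intros H. apply derive_quot in H. apply (proj2 (limR (locally x0) _ _)). intros eps He.
  pose proof (proj1 (limR (locally' x0) _ _) H eps He) as [e He'].
  exists e. intros x B. unfold slope. destruct (Req_EM_T x x0).
  rewrite Rminus_eq_0, Rabs_R0. lra. now apply He'.
Qed.

Section Lims.
Context {T : Type} (F : (T -> Prop) -> Prop) {FF : Filter F}.

Lemma lim_plus (f g : T -> R) (a b : R) : filterlim f F (locally a) -> filterlim g F (locally b) ->
  filterlim (fun s => f s + g s) F (locally (a + b)).
Proof. intros. apply (filterlim_comp_2 f g Rplus H H0). apply (filterlim_plus a b). Qed.

Lemma lim_mult (f g : T -> R) (a b : R) : filterlim f F (locally a) -> filterlim g F (locally b) ->
  filterlim (fun s => f s * g s) F (locally (a * b)).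
Proof. intros. apply (filterlim_comp_2 f g Rmult H H0). apply (filterlim_mult a b). Qed.

Lemma lim_const (c : R) : filterlim (fun _ => c) F (locally c).
Proof. apply filterlim_const. Qed.

Lemma lim_inv (f : T -> R) (a : R) : filterlim f F (locally a) -> a <> 0 ->
  filterlim (fun s => / f s) F (locally (/ a)).
Proof.
  intros. apply (filterlim_comp _ _ _ f Rinv F (locally a) (locally (/ a)) H).
  apply (ex_derive_continuous Rinv a). auto_derive. auto.
Qed.

Lemma lim_cont (f : T -> R) (g : R -> R) (a : R) : filterlim f F (locally a) -> continuous g a ->
  filterlim (fun s => g (f s)) F (locally (g a)).
Proof. intros. exact (filterlim_comp _ _ _ f g F (locally a) (locally (g a)) H H0). Qed.

Lemma lim_minus (f g : T -> R) (a b : R) : filterlim f F (locally a) -> filterlim g F (locally b) ->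
  filterlim (fun s => f s - g s) F (locally (a - b)).
Proof.
  intros. apply lim_plus. auto.
  apply (lim_cont g Ropp b H0). apply (ex_derive_continuous Ropp b). auto_derive. auto.
Qed.

Lemma lim_ext (f g : T -> R) (a : R) : F (fun s => f s = g s) -> filterlim f F (locally a) -> filterlim g F (locally a).
Proof. intros. eapply filterlim_ext_loc; eauto. Qed.

End Lims.

Definition IG (k x : R) : R := Sx x / (x - k).

Lemma loc_loc' (x : R) (P : R -> Prop) : locally x P -> locally' x P.
Proof. intros H. unfold locally', within. apply (filter_imp P); auto. Qed.

Lemma Hk_gt1 k y : 0 < k < 1 -> 0 < y -> 1 < Hk k y.
Proof.
  intros. destruct (Hk_spec k y) as [h1 h2]; try lra.
  destruct (Req_dec (Hk k y) 1) as [e|ne]. rewrite e, Gk_1 in h2. lra. lra.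
Qed.

Lemma Hk_derive (k y : R -> R) (s0 k' y' : R) :
  is_derive k s0 k' -> is_derive y s0 y' ->
  locally s0 (fun s => 0 < k s < 1 /\ 0 <= y s) ->
  0 < k s0 < 1 -> 0 < y s0 ->
  is_derive (fun s => Hk (k s) (y s)) s0
    ((y' + k' * Lx (Hk (k s0) (y s0))) * IG (k s0) (Hk (k s0) (y s0))).
Proof.
  intros Dk Dy Hloc Hk0 Hy0.
  set (X := fun s => Hk (k s) (y s)). set (X0 := X s0). set (L0 := Lx X0).
  assert (hX0 : 1 < X0) by (apply Hk_gt1; auto).
  assert (hS0 := Sx_pos X0 hX0).
  assert (Xc : filterlim X (locally s0) (locally X0)).
  { apply (Hk_lim (locally s0) k y); auto. lra.
    apply (ex_derive_continuous k). eexists; eauto.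
    apply (ex_derive_continuous y). eexists; eauto. }
  set (dS := X0 / Sx X0). set (dL := / Sx X0).
  set (sig := fun s => slope Sx X0 dS (X s) - k s * slope Lx X0 dL (X s)).
  assert (Hsig : filterlim sig (locally s0) (locally (dS - k s0 * dL))).
  { apply lim_minus; try exact _.
    apply (filterlim_comp _ _ _ X (slope Sx X0 dS) _ (locally X0)); auto.
    apply slope_lim. now apply is_derive_Sx.
    apply lim_mult; try exact _. apply (ex_derive_continuous k). eexists; eauto.
    apply (filterlim_comp _ _ _ X (slope Lx X0 dL) _ (locally X0)); auto.
    apply slope_lim. now apply is_derive_Lx. }
  assert (hsig0 : 0 < dS - k s0 * dL).
  { unfold dS, dL. replace (X0 / Sx X0 - k s0 * / Sx X0) with ((X0 - k s0) / Sx X0) by (field; lra).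
    apply Rdiv_lt_0_compat; lra. }
  assert (Hpos : locally s0 (fun s => 0 < sig s)).
  { pose proof (proj1 (limR (locally s0) _ _) Hsig _ hsig0) as H.
    revert H. apply filter_imp.
    intros s h. apply Rabs_def2 in h. lra. }
  assert (Hid : locally s0 (fun s => (y s - y s0) + (k s - k s0) * L0 = sig s * (X s - X0))).
  { revert Hloc. apply filter_imp. intros s [hk hy].
    destruct (Hk_spec (k s) (y s) hk hy) as [h1 h2].
    destruct (Hk_spec (k s0) (y s0) Hk0 ltac:(lra)) as [h3 h4].
    assert (E : y s - y s0 + (k s - k s0) * L0 = (Sx (X s) - Sx X0) - k s * (Lx (X s) - Lx X0)).
    { rewrite <- h2 at 1. rewrite <- h4. rewrite !Gk_eq. unfold L0, X0, X. ring. }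
    rewrite E. unfold sig. rewrite (slope_eq Sx X0 dS (X s)), (slope_eq Lx X0 dL (X s)). ring. }
  apply quot_derive.
  apply (lim_ext (locally' s0) (fun s => ((y s - y s0) / (s - s0) + (k s - k s0) / (s - s0) * L0) * / sig s)).
  { unfold locally', within. generalize (filter_and _ _ Hpos Hid). apply filter_imp.
    intros s [hp hi] hs. fold (X s). fold X0.
    assert (s - s0 <> 0) by lra.
    replace ((y s - y s0) / (s - s0) + (k s - k s0) / (s - s0) * L0) with
      (((y s - y s0) + (k s - k s0) * L0) / (s - s0)) by (field; auto).
    rewrite hi. change (sig s * (X s - X0) / (s - s0) * / sig s = (X s - X0) / (s - s0)). field. split; lra. }
  replace ((y' + k' * Lx (Hk (k s0) (y s0))) * IG (k s0) (Hk (k s0) (y s0))) with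
    ((y' + k' * L0) * / (dS - k s0 * dL)).
  2:{ unfold IG, L0, X0, X, dS, dL. fold (X s0). fold X0. field. split; lra. }
  apply lim_mult; try exact _. apply lim_plus; try exact _. now apply derive_quot.
  apply lim_mult; try exact _. now apply derive_quot. apply filterlim_const.
  apply lim_inv; try exact _. apply (filterlim_filter_le_1 (F:=locally s0) sig). intros P HP. now apply loc_loc'. exact Hsig. lra.
Qed.

Lemma Hk_derive0 (k y : R -> R) (s0 M : R) :
  filterlim k (locally s0) (locally (k s0)) -> 0 < k s0 < 1 -> y s0 = 0 ->
  locally s0 (fun s => 0 < k s < 1 /\ 0 <= y s /\ y s <= M * Rabs (s - s0)) ->
  is_derive (fun s => Hk (k s) (y s)) s0 0.
Proof.
  intros Kc Hk0 Hy0 Hloc.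
  apply quot_derive. apply (proj2 (limR _ _ _)). intros eps He.
  assert (Hc : locally s0 (fun s => Rabs (k s - k s0) < (1 - k s0) / 2)).
  { apply (proj1 (limR _ _ _) Kc). lra. }
  destruct (filter_and _ _ Hloc Hc) as [e He'].
  set (B := 4 * (M ^ 2 + 1) / (1 - k s0) ^ 2).
  assert (hB : 0 < B). { unfold B. apply Rdiv_lt_0_compat. nra. apply pow_lt. lra. }
  assert (hd : 0 < Rmin e (eps / B)). { apply Rmin_pos. apply cond_pos. apply Rdiv_lt_0_compat; lra. }
  exists (mkposreal _ hd). intros s Bs hs. simpl in Bs. change (Rabs (s - s0) < Rmin e (eps / B)) in Bs.
  assert (Bs1 : Rabs (s - s0) < e) by (eapply Rlt_le_trans; [apply Bs | apply Rmin_l]).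
  assert (Bs2 : Rabs (s - s0) < eps / B) by (eapply Rlt_le_trans; [apply Bs | apply Rmin_r]).
  destruct (He' s Bs1) as [[hk [hy hyM]] hc].
  change (Rabs ((Hk (k s) (y s) - Hk (k s0) (y s0)) / (s - s0) - 0) < eps).
  rewrite Hy0, Hk_0 by auto. rewrite Rminus_0_r.
  destruct (Hk_spec (k s) (y s) hk hy) as [h1 h2].
  set (X := Hk (k s) (y s)) in *.
  assert (g4 := G4 (k s) X hk h1). rewrite h2 in g4.
  assert (hS := Sx_sq X h1). assert (hS0 := Sx_ge0 X).
  assert (hks : (1 - k s0) / 2 <= 1 - k s). { apply Rabs_def2 in hc. lra. }
  set (u := Rabs (s - s0)) in *.
  assert (hu : 0 < u). { unfold u. apply Rabs_pos_lt. lra. }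
  assert (q1 : (1 - k s) * Sx X <= M * u) by lra.
  assert (q2 : ((1 - k s) * Sx X) ^ 2 <= (M * u) ^ 2).
  { apply pow_incr. split. apply Rmult_le_pos; lra. lra. }
  assert (q3 : ((1 - k s0) / 2) ^ 2 * (X - 1) <= (M * u) ^ 2).
  { assert (((1 - k s0) / 2) ^ 2 <= (1 - k s) ^ 2). apply pow_incr. lra.
    assert (X - 1 <= Sx X ^ 2) by nra. 
    replace (((1 - k s) * Sx X) ^ 2) with ((1 - k s) ^ 2 * Sx X ^ 2) in q2 by ring.
    assert (0 <= X - 1) by lra. nra. }
  assert (q4 : X - 1 <= B * u ^ 2).
  { unfold B. apply (Rmult_le_reg_l (((1 - k s0) / 2) ^ 2)). apply pow_lt. lra.
    eapply Rle_trans. apply q3. 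
    replace (((1 - k s0) / 2) ^ 2 * (4 * (M ^ 2 + 1) / (1 - k s0) ^ 2 * u ^ 2)) with ((M^2 + 1) * u ^ 2) by (field; lra).
    nra. }
  rewrite Rabs_div by lra. fold u. rewrite Rabs_right by lra.
  apply (Rmult_lt_reg_r u). auto. unfold Rdiv. rewrite Rmult_assoc, Rinv_l, Rmult_1_r by lra.
  assert (u * B < eps). { apply (Rmult_lt_compat_r B) in Bs2; auto. unfold Rdiv in Bs2. rewrite Rmult_assoc, Rinv_l, Rmult_1_r in Bs2 by lra. exact Bs2. }
  nra.
Qed.

Lemma dmult (f g : R -> R) (x df dg : R) : is_derive f x df -> is_derive g x dg ->
  is_derive (fun t => f t * g t) x (df * g x + f x * dg).
Proof. intros. apply (is_derive_mult f g x df dg H H0). intros; apply Rmult_comm. Qed.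

Lemma dminus (f g : R -> R) (x df dg : R) : is_derive f x df -> is_derive g x dg ->
  is_derive (fun t => f t - g t) x (df - dg).
Proof. intros. apply (is_derive_minus f g x df dg H H0). Qed.

Lemma dplus (f g : R -> R) (x df dg : R) : is_derive f x df -> is_derive g x dg ->
  is_derive (fun t => f t + g t) x (df + dg).
Proof. intros. apply (is_derive_plus f g x df dg H H0). Qed.

Lemma dcomp (f g : R -> R) (x df dg : R) : is_derive f (g x) df -> is_derive g x dg ->
  is_derive (fun t => f (g t)) x (dg * df).
Proof. intros. apply (is_derive_comp f g x df dg H H0). Qed.

Lemma dconst (c x : R) : is_derive (fun _ => c) x 0.
Proof. apply (is_derive_const c x). Qed.

Lemma did (x : R) : is_derive (fun t => t) x 1.
Proof. apply (is_derive_id x). Qed.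

Lemma deriv_cont (f : R -> R) (x d : R) : is_derive f x d -> filterlim f (locally x) (locally (f x)).
Proof. intros. apply (ex_derive_continuous f x). eexists; eauto. Qed.

Lemma kappa_bounds m b l : 0 < m -> 0 < l -> 0 < b -> 0 < kappa m b l < 1.
Proof.
  intros. unfold kappa.
  assert (h : 0 < 4 * b ^ 2 * l / m ^ 2). { apply Rdiv_lt_0_compat. apply Rmult_lt_0_compat. nra. auto. nra. }
  assert (h1 : sqrt 1 < sqrt (1 + 4 * b ^ 2 * l / m ^ 2)) by (apply sqrt_lt_1_alt; split; lra).
  rewrite sqrt_1 in h1.
  split. apply Rinv_0_lt_compat. lra.
  assert (h2 : / sqrt (1 + 4 * b ^ 2 * l / m ^ 2) < / 1) by (apply Rinv_lt_contravar; nra). rewrite Rinv_1 in h2. exact h2.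
Qed.

Lemma pp_pos m b l : 0 < m -> 0 < l -> 0 < b -> 0 < pp m b l.
Proof.
  intros. unfold pp. destruct (kappa_bounds m b l H H0 H1).
  apply Rdiv_lt_0_compat. auto. apply Rmult_lt_0_compat; nra.
Qed.

Lemma kappa_ex_derive (m b l : R) : 0 < m -> 0 < l -> ex_derive (fun b => kappa m b l) b.
Proof.
  intros. unfold kappa. 
  assert (0 <= 4 * b ^ 2 * l / m ^ 2). { apply Rdiv_le_0_compat. apply Rmult_le_pos. nra. lra. nra. }
  auto_derive.
  assert (E: 1 + 4*(b*(b*1))*l*/(m*(m*1)) = 1 + 4*b^2*l/m^2) by (field; lra). rewrite E.
  split. lra. split. apply Rgt_not_eq, sqrt_lt_R0; lra. auto.
Qed.

Lemma pp_ex_derive (m b l : R) : 0 < m -> 0 < l -> 0 < b -> ex_derive (fun b => pp m b l) b.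
Proof.
  intros. unfold pp. destruct (kappa_bounds m b l H H0 H1).
  destruct (kappa_ex_derive m b l H H0) as [dk Dk].
  eexists. apply (is_derive_div (fun _ => m) (fun b => 2 * b ^ 2 * kappa m b l)).
  apply dconst. apply (dmult (fun b => 2 * b ^ 2) (fun b => kappa m b l)).
  auto_derive; auto. exact Dk. apply Rgt_not_eq. apply Rmult_lt_0_compat; nra.
Qed.

Definition kd m l b := Derive (fun b => kappa m b l) b.
Definition pd m l b := Derive (fun b => pp m b l) b.
Definition Xf m l u b := Hk (kappa m b l) (Rabs u / pp m b l).
Definition Acoef m l u b := sign u * IG (kappa m b l) (Xf m l u b).
Definition Bcoef m l u b := pd m l b * Xf m l u b
  + pp m b l * ((- Rabs u * pd m l b / (pp m b l) ^ 2 + kd m l b * Lx (Xf m l u b)) * IG (kappa m b l) (Xf m l u b))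
  - pd m l b * kappa m b l - pp m b l * kd m l b.

Lemma kd_spec (m l b : R) : 0 < m -> 0 < l -> is_derive (fun b => kappa m b l) b (kd m l b).
Proof. intros. apply Derive_correct. now apply kappa_ex_derive. Qed.

Lemma pd_spec (m l b : R) : 0 < m -> 0 < l -> 0 < b -> is_derive (fun b => pp m b l) b (pd m l b).
Proof. intros. apply Derive_correct. now apply pp_ex_derive. Qed.

Lemma loc_pos (f : R -> R) (s0 d : R) : is_derive f s0 d -> 0 < f s0 -> locally s0 (fun s => f s0 / 2 < f s).
Proof.
  intros D h. pose proof (proj1 (limR _ _ _) (deriv_cont f s0 d D) (f s0 / 2) ltac:(lra)) as H.
  revert H. apply filter_imp. intros s hs. apply Rabs_def2 in hs. lra.
Qed.

Lemma curve (m l : R) (u b : R -> R) (s0 u' b' : R) : 0 < m -> 0 < l ->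
  is_derive u s0 u' -> is_derive b s0 b' -> 0 < b s0 ->
  is_derive (fun s => Rfun m (u s) (b s) l) s0
    (Acoef m l (u s0) (b s0) * u' + Bcoef m l (u s0) (b s0) * b').
Proof.
  intros hm hl Du Db hb0.
  set (K := fun s => kappa m (b s) l). set (P := fun s => pp m (b s) l).
  set (Y := fun s => Rabs (u s) / P s). set (X := fun s => Hk (K s) (Y s)).
  assert (DK : is_derive K s0 (b' * kd m l (b s0))).
  { apply (dcomp (fun b => kappa m b l) b). now apply kd_spec. exact Db. }
  assert (DP : is_derive P s0 (b' * pd m l (b s0))).
  { apply (dcomp (fun b => pp m b l) b). now apply pd_spec. exact Db. }
  assert (Hb := loc_pos b s0 b' Db hb0).
  assert (hP0 : 0 < P s0) by (apply pp_pos; auto).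
  assert (hK0 : 0 < K s0 < 1) by (apply kappa_bounds; auto).
  assert (Hloc : locally s0 (fun s => 0 < K s < 1 /\ 0 <= Y s /\ 0 < P s)).
  { revert Hb. apply filter_imp. intros s hs.
    assert (0 < P s) by (apply pp_pos; auto; lra).
    split. apply kappa_bounds; auto; lra. split; auto.
    apply Rdiv_le_0_compat; auto. apply Rabs_pos. }
  apply (is_derive_ext (fun s => P s * X s - P s * K s)). { intros; reflexivity. }
  destruct (Req_dec (u s0) 0) as [u0|u0].
  -
    assert (hY0 : Y s0 = 0). { unfold Y. rewrite u0, Rabs_R0. unfold Rdiv. ring. }
    assert (HPl := loc_pos P s0 _ DP hP0).
    assert (Hq := proj1 (limR _ _ _) (derive_quot u s0 u' Du) 1 ltac:(lra)).
    set (M := (Rabs u' + 1) * (2 / P s0)).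
    assert (DX : is_derive X s0 0).
    { apply (Hk_derive0 K Y s0 M). apply (deriv_cont K s0 _ DK). auto. auto.
      unfold locally', within in Hq. generalize (filter_and _ _ Hloc (filter_and _ _ HPl Hq)).
      apply filter_imp. intros s [[hk [hy hp]] [hp2 hq]]. split; auto. split; auto.
      assert (hu : Rabs (u s) <= (Rabs u' + 1) * Rabs (s - s0)).
      { destruct (Req_dec s s0) as [e|ne]. subst. rewrite u0, Rabs_R0, Rminus_eq_0, Rabs_R0. lra.
        specialize (hq ne). rewrite u0, Rminus_0_r in hq.
        assert (Rabs (u s / (s - s0)) < Rabs u' + 1).
        { assert (h := Rabs_triang_inv (u s / (s - s0)) u'). lra. }
        rewrite Rabs_div in H by lra.
        assert (0 < Rabs (s - s0)) by (apply Rabs_pos_lt; lra).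
        apply (Rmult_lt_compat_r (Rabs (s - s0))) in H; auto.
        unfold Rdiv in H. rewrite Rmult_assoc, Rinv_l, Rmult_1_r in H by lra. lra. }
      unfold Y, M. 
      assert (Rabs (u s) / P s <= Rabs (u s) * (2 / P s0)).
      { unfold Rdiv. apply Rmult_le_compat_l. apply Rabs_pos.
        assert (hi : / P s <= / (P s0 / 2)) by (apply Rinv_le_contravar; lra).
        replace (/ (P s0 / 2)) with (2 * / P s0) in hi by (field; lra). lra. }
      assert (0 <= 2 / P s0) by (apply Rdiv_le_0_compat; lra).
      nra. }
    assert (D := dminus _ _ s0 _ _ (dmult P X s0 _ _ DP DX) (dmult P K s0 _ _ DP DK)).
    replace (Acoef m l (u s0) (b s0) * u' + Bcoef m l (u s0) (b s0) * b') with
      (b' * pd m l (b s0) * X s0 + P s0 * 0 - (b' * pd m l (b s0) * K s0 + P s0 * (b' * kd m l (b s0)))).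
    exact D.
    assert (hX : Xf m l (u s0) (b s0) = 1). { unfold Xf. fold (K s0) (P s0). rewrite u0, Rabs_R0. unfold Rdiv. rewrite Rmult_0_l. now apply Hk_0. }
    assert (hX' : X s0 = 1). { unfold X. rewrite hY0. now apply Hk_0. }
    unfold Acoef, Bcoef. rewrite hX, hX', u0, Lx_1. unfold IG. rewrite Sx_1, sign_0. fold (K s0) (P s0).
    rewrite Rabs_R0. field. lra.
  - assert (DY : is_derive Y s0 ((sign (u s0) * u' * P s0 - Rabs (u s0) * (b' * pd m l (b s0))) / P s0 ^ 2)).
    { apply (is_derive_div (fun s => Rabs (u s)) P). apply (is_derive_Rabs u); auto. exact DP. lra. }
    assert (hY0 : 0 < Y s0). { unfold Y. apply Rdiv_lt_0_compat; auto. now apply Rabs_pos_lt. }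
    assert (DX := Hk_derive K Y s0 _ _ DK DY ltac:(revert Hloc; apply filter_imp; tauto) hK0 hY0).
    assert (D := dminus _ _ s0 _ _ (dmult P X s0 _ _ DP DX) (dmult P K s0 _ _ DP DK)).
    match type of D with is_derive _ _ ?v => replace (Acoef m l (u s0) (b s0) * u' + Bcoef m l (u s0) (b s0) * b') with v end.
    exact D.
    unfold Acoef, Bcoef. change (Xf m l (u s0) (b s0)) with (X s0). fold (K s0) (P s0). 
    change (Hk (K s0) (Y s0)) with (X s0). field. lra.
Qed.

Lemma Rfun_lim {T} (F : (T -> Prop) -> Prop) {FF : Filter F} (m l : R) (u b : T -> R) (u0 b0 : R) :
  0 < m -> 0 < l -> 0 < b0 ->
  filterlim u F (locally u0) -> filterlim b F (locally b0) ->
  filterlim (fun s => Rfun m (u s) (b s) l) F (locally (Rfun m u0 b0 l)).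
Proof.
  intros hm hl hb0 Hu Hb.
  assert (HK : filterlim (fun s => kappa m (b s) l) F (locally (kappa m b0 l))).
  { apply (lim_cont F b (fun b => kappa m b l)); auto. exact (ex_derive_continuous (fun b => kappa m b l) b0 (kappa_ex_derive m b0 l hm hl)). }
  assert (HP : filterlim (fun s => pp m (b s) l) F (locally (pp m b0 l))).
  { apply (lim_cont F b (fun b => pp m b l)); auto. exact (ex_derive_continuous (fun b => pp m b l) b0 (pp_ex_derive m b0 l hm hl hb0)). }
  assert (hP0 := pp_pos m b0 l hm hl hb0).
  assert (HY : filterlim (fun s => Rabs (u s) / pp m (b s) l) F (locally (Rabs u0 / pp m b0 l))).
  { apply lim_mult; auto. apply (lim_cont F u Rabs); auto. apply continuous_Rabs.
    apply lim_inv; auto. lra. }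
  assert (Hev : F (fun s => b0 / 2 < b s)).
  { pose proof (proj1 (limR F _ _) Hb (b0 / 2) ltac:(lra)) as H. revert H. apply filter_imp.
    intros s hs. apply Rabs_def2 in hs. lra. }
  assert (HX := Hk_lim F (fun s => kappa m (b s) l) (fun s => Rabs (u s) / pp m (b s) l)
     (kappa m b0 l) (Rabs u0 / pp m b0 l) (kappa_bounds m b0 l hm hl hb0)
     ltac:(apply Rdiv_le_0_compat; [apply Rabs_pos | lra])
     ltac:(revert Hev; apply filter_imp; intros s hs; split; [apply kappa_bounds; auto; lra | apply Rdiv_le_0_compat; [apply Rabs_pos | apply pp_pos; auto; lra]])
     HK HY).
  unfold Rfun. apply lim_minus; auto. apply lim_mult; auto. apply lim_mult; auto.
Qed.

Definition wf m l b := sqrt (1 + 4 * b ^ 2 * l / m ^ 2).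
Definition r0c m l b := 2 * l / (m * (1 + wf m l b)).
Definition rho m l b := atan (r0c m l b).

Lemma wf_ge1 m l b : 0 < m -> 0 < l -> 1 <= wf m l b.
Proof.
  intros. unfold wf. assert (0 <= 4 * b ^ 2 * l / m ^ 2). { apply Rdiv_le_0_compat. apply Rmult_le_pos. nra. lra. nra. }
  rewrite <- sqrt_1 at 1. apply sqrt_le_1_alt. lra.
Qed.

Lemma wf_sq m l b : 0 < m -> 0 < l -> wf m l b ^ 2 = 1 + 4 * b ^ 2 * l / m ^ 2.
Proof.
  intros. unfold wf. assert (0 <= 4 * b ^ 2 * l / m ^ 2). { apply Rdiv_le_0_compat. apply Rmult_le_pos. nra. lra. nra. }
  rewrite pow2_sqrt; lra.
Qed.

Lemma r0c_eq m l b : 0 < m -> 0 < l -> 0 < b -> pp m b l * (1 - kappa m b l) = r0c m l b.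
Proof.
  intros. assert (h1 := wf_ge1 m l b H H0). assert (h2 := wf_sq m l b H H0).
  unfold pp, kappa, r0c. fold (wf m l b). set (w := wf m l b) in *.
  field_simplify; try (split; nra).
  replace (2 * l) with (m ^ 2 * (w ^ 2 - 1) / (2 * b ^ 2)) by (rewrite h2; field; split; lra).
  field. split; nra.
Qed.

Lemma r0c_derive (m l b : R) : 0 < m -> 0 < l ->
  is_derive (r0c m l) b (- 8 * b * l ^ 2 / (m ^ 3 * wf m l b * (1 + wf m l b) ^ 2)).
Proof.
  intros. assert (h1 := wf_ge1 m l b H H0). assert (h2 := wf_sq m l b H H0).
  assert (0 <= 4 * b ^ 2 * l / m ^ 2). { apply Rdiv_le_0_compat. apply Rmult_le_pos. nra. lra. nra. }
  unfold r0c, wf in *. auto_derive;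
  replace (1 + 4 * (b * (b * 1)) * l * / (m * (m * 1))) with (1 + 4 * b ^ 2 * l / m ^ 2) by (field; lra).
  split. lra. split. apply Rgt_not_eq. apply Rmult_lt_0_compat; lra. auto.
  set (w := sqrt (1 + 4 * b ^ 2 * l / m ^ 2)) in *. field. lra.
Qed.

Lemma rho_derive (m l b : R) : 0 < m -> 0 < l ->
  is_derive (rho m l) b ((- 8 * b * l ^ 2 / (m ^ 3 * wf m l b * (1 + wf m l b) ^ 2)) * / (1 + (r0c m l b)²)).
Proof.
  intros. unfold rho. apply (dcomp atan (r0c m l)). apply is_derive_atan. now apply r0c_derive.
Qed.

Lemma rho_bound (m l b : R) : 0 < m -> 0 < l -> 0 <= b ->
  Rabs ((- 8 * b * l ^ 2 / (m ^ 3 * wf m l b * (1 + wf m l b) ^ 2)) * / (1 + (r0c m l b)²)) <= 2 * b / m.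
Proof.
  intros. assert (h1 := wf_ge1 m l b H H0). set (w := wf m l b) in *.
  unfold r0c. fold w. unfold Rsqr.
  replace ((- 8 * b * l ^ 2 / (m ^ 3 * w * (1 + w) ^ 2)) * / (1 + 2 * l / (m * (1 + w)) * (2 * l / (m * (1 + w)))))
    with (- (8 * b * l ^ 2 / (m * w * (m ^ 2 * (1 + w) ^ 2 + 4 * l ^ 2)))) by (field; repeat split; nra).
  rewrite Rabs_Ropp. rewrite Rabs_right.
  2:{ apply Rle_ge. apply Rdiv_le_0_compat. nra. apply Rmult_lt_0_compat. nra. nra. }
  apply (Rmult_le_reg_r (m * w * (m ^ 2 * (1 + w) ^ 2 + 4 * l ^ 2))). apply Rmult_lt_0_compat. nra. nra.
  unfold Rdiv. rewrite Rmult_assoc, Rinv_l, Rmult_1_r by (apply Rgt_not_eq, Rmult_lt_0_compat; nra).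
  replace (2 * b * / m * (m * w * (m ^ 2 * (1 + w) ^ 2 + 4 * l ^ 2))) with (2 * b * (w * (m ^ 2 * (1 + w) ^ 2 + 4 * l ^ 2))) by (field; lra).
  assert (w * (m ^ 2 * (1 + w) ^ 2 + 4 * l ^ 2) >= 4 * l ^ 2). nra.
  nra.
Qed.


Definition rhod m l b := (- 8 * b * l ^ 2 / (m ^ 3 * wf m l b * (1 + wf m l b) ^ 2)) * / (1 + (r0c m l b)²).

Lemma sign_abs_le x : Rabs (sign x) <= 1.
Proof.
  destruct (Rtotal_order x 0) as [h|[h|h]].
  rewrite sign_eq_m1 by auto. rewrite Rabs_left; lra.
  subst. rewrite sign_0, Rabs_R0; lra.
  rewrite sign_eq_1 by auto. rewrite Rabs_R1; lra.
Qed.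

Lemma sign_sq x : x <> 0 -> sign x * sign x = 1.
Proof.
  intros. destruct (Rtotal_order x 0) as [h|[h|h]].
  rewrite sign_eq_m1 by auto. ring. lra. rewrite sign_eq_1 by auto. ring.
Qed.

Lemma IG_nonneg k x : 0 < k < 1 -> 1 <= x -> 0 <= IG k x.
Proof. intros. unfold IG. apply Rdiv_le_0_compat. apply Sx_ge0. lra. Qed.

Lemma Rfun_ge (m u b l : R) : 0 < m -> 0 < l -> 0 < b -> r0c m l b <= Rfun m u b l.
Proof.
  intros. rewrite <- r0c_eq by auto. unfold Rfun.
  destruct (Hk_spec (kappa m b l) (Rabs u / pp m b l)) as [h1 h2].
  apply kappa_bounds; auto. apply Rdiv_le_0_compat. apply Rabs_pos. apply pp_pos; auto.
  assert (0 < pp m b l) by (apply pp_pos; auto). nra.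
Qed.

Lemma Rfun_0 (m b l : R) : 0 < m -> 0 < l -> 0 < b -> Rfun m 0 b l = r0c m l b.
Proof.
  intros. rewrite <- r0c_eq by auto. unfold Rfun. rewrite Rabs_R0. unfold Rdiv. rewrite Rmult_0_l.
  rewrite Hk_0. ring. apply kappa_bounds; auto.
Qed.

Lemma r0c_pos m l b : 0 < m -> 0 < l -> 0 < r0c m l b.
Proof.
  intros. assert (h1 := wf_ge1 m l b H H0). unfold r0c. apply Rdiv_lt_0_compat. lra. nra.
Qed.

Lemma atan_le_id x : 0 <= x -> atan x <= x.
Proof.
  intros. destruct (Req_dec x 0). subst. rewrite atan_0. lra.
  destruct (MVT_gen (fun y => y - atan y) 0 x (fun y => Rmax 0 (1 - / (1 + y²)))) as [c [Hc Hm]].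
  - intros y Hy. rewrite Rmax_right. apply (dminus (fun y => y) atan). apply did. apply is_derive_atan.
    assert (0 <= y²) by apply Rle_0_sqr. assert (/ (1 + y²) <= 1). rewrite <- Rinv_1. apply Rinv_le_contravar; lra. lra.
  - intros y Hy. apply continuity_pt_filterlim. apply (ex_derive_continuous (fun y => y - atan y)).
    eexists. apply (dminus (fun y => y) atan). apply did. apply is_derive_atan.
  - rewrite atan_0 in Hm. assert (0 <= Rmax 0 (1 - / (1 + c²))) by apply Rmax_l. nra.
Qed.

Lemma pi2_minus_atan x : 0 < x -> PI / 2 - atan x <= / x.
Proof.
  intros. rewrite <- atan_inv by auto. apply atan_le_id. left. now apply Rinv_0_lt_compat.
Qed.

Lemma rho_nonneg m l b : 0 < m -> 0 < l -> 0 <= rho m l b.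
Proof. intros. unfold rho. rewrite <- atan_0. left. apply atan_increasing. now apply r0c_pos. Qed.

Lemma sgnlim {T} (F : (T -> Prop) -> Prop) {FF : Filter F} (u D : T -> R) (u0 D0 : R) :
  filterlim u F (locally u0) -> filterlim D F (locally D0) -> (u0 = 0 -> D0 = 0) ->
  filterlim (fun s => sign (u s) * D s) F (locally (sign u0 * D0)).
Proof.
  intros Hu HD Hz. destruct (Rtotal_order u0 0) as [h|[h|h]].
  - apply (lim_ext F (fun s => -1 * D s)); try exact _.
    + pose proof (proj1 (limR F _ _) Hu (- u0) ltac:(lra)) as H. revert H. apply filter_imp.
      intros s hs. apply Rabs_def2 in hs. rewrite sign_eq_m1 by lra. ring.
    + rewrite sign_eq_m1 by auto. apply lim_mult; auto. apply filterlim_const.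
  - assert (hD0 : D0 = 0) by (apply Hz; exact h). rewrite h, hD0, sign_0, Rmult_0_l. apply (proj2 (limR F _ _)). intros eps He.
    pose proof (proj1 (limR F _ _) HD eps He) as H. revert H. apply filter_imp. intros s hs.
    rewrite hD0, Rminus_0_r in hs. rewrite Rminus_0_r, Rabs_mult.
    assert (h1 := sign_abs_le (u s)). assert (h2 := Rabs_pos (D s)). assert (h3 := Rabs_pos (sign (u s))). nra.
  - apply (lim_ext F (fun s => 1 * D s)); try exact _.
    + pose proof (proj1 (limR F _ _) Hu u0 ltac:(lra)) as H. revert H. apply filter_imp.
      intros s hs. apply Rabs_def2 in hs. rewrite sign_eq_1 by lra. ring.
    + rewrite sign_eq_1 by auto. apply lim_mult; auto. apply filterlim_const.
Qed.

Lemma qz (Q D : R -> R) (t0 : R) : is_derive D t0 0 -> D t0 = 0 -> Q t0 = 0 ->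
  (forall t, Rabs (Q t) <= Rabs (D t)) -> is_derive Q t0 0.
Proof.
  intros HD hD hQ hb. apply quot_derive. apply (proj2 (limR _ _ _)). intros eps He.
  pose proof (proj1 (limR _ _ _) (derive_quot D t0 0 HD) eps He) as H. revert H. apply filter_imp.
  intros t ht. rewrite hQ, !Rminus_0_r. rewrite hD, !Rminus_0_r in ht.
  destruct (Req_dec t t0). subst. rewrite Rminus_eq_0. unfold Rdiv. rewrite Rinv_0, Rmult_0_r, Rabs_R0. lra.
  rewrite Rabs_div in * by lra. eapply Rle_lt_trans. 2: exact ht. unfold Rdiv.
  apply Rmult_le_compat_r. left. apply Rinv_0_lt_compat. apply Rabs_pos_lt. lra. apply hb.
Qed.

Lemma within_eps (E : R -> R) (T x0 : R) :
  filterlim E (within (fun s => 0 <= s <= T) (locally x0)) (locally (E x0)) ->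
  forall eta, 0 < eta -> exists d, 0 < d /\ forall s, 0 <= s <= T -> Rabs (s - x0) < d -> Rabs (E s - E x0) < eta.
Proof.
  intros H eta He. pose proof (proj1 (limR _ _ _) H eta He) as [d Hd].
  exists d. split. apply cond_pos. intros s hs hd. apply Hd. exact hd. exact hs.
Qed.

Lemma mono (E : R -> R) (T : R) : 0 < T ->
  (forall t, 0 < t < T -> exists d, 0 <= d /\ is_derive E t d) ->
  (forall t, 0 <= t <= T -> filterlim E (within (fun s => 0 <= s <= T) (locally t)) (locally (E t))) ->
  forall t, 0 <= t <= T -> E 0 <= E t.
Proof.
  intros hT Hd Hc.
  assert (Hint : forall s t, 0 < s -> s < t -> t < T -> E s <= E t).
  { intros s t h1 h2 h3.
    destruct (MVT_gen E s t (Derive E)) as [c [hc hm]].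
    - intros x hx. rewrite Rmin_left, Rmax_right in hx by lra.
      destruct (Hd x ltac:(lra)) as [d [_ D]]. apply Derive_correct. eexists; eauto.
    - intros x hx. rewrite Rmin_left, Rmax_right in hx by lra.
      destruct (Hd x ltac:(lra)) as [d [_ D]]. apply continuity_pt_filterlim. apply (deriv_cont E x d D).
    - rewrite Rmin_left, Rmax_right in hc by lra.
      destruct (Hd c ltac:(lra)) as [d [hd D]]. rewrite (is_derive_unique E c d D) in hm. nra. }
  assert (Hopen : forall t, 0 < t < T -> E 0 <= E t).
  { intros t ht. destruct (Rle_lt_dec (E 0) (E t)) as [h|h]. auto. exfalso.
    destruct (within_eps E T 0 (Hc 0 ltac:(lra)) (E 0 - E t) ltac:(lra)) as [d [hd Hd']].
    set (s := Rmin (t / 2) (d / 2)).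
    assert (hs1 : s <= t / 2) by apply Rmin_l. assert (hs2 : s <= d / 2) by apply Rmin_r.
    assert (hs0 : 0 < s) by (apply Rmin_pos; lra).
    specialize (Hd' s ltac:(lra) ltac:(rewrite Rminus_0_r, Rabs_right; lra)).
    assert (E s <= E t) by (apply Hint; lra). apply Rabs_def2 in Hd'. lra. }
  intros t ht. destruct (Req_dec t 0) as [e|ne]. subst; lra.
  destruct (Req_dec t T) as [e|ne']. 2: apply Hopen; lra.
  subst. destruct (Rle_lt_dec (E 0) (E T)) as [h|h]. auto. exfalso.
  destruct (within_eps E T T (Hc T ltac:(lra)) (E 0 - E T) ltac:(lra)) as [d [hd Hd']].
  set (s := T - Rmin (T / 2) (d / 2)).
  assert (hs1 : Rmin (T / 2) (d / 2) <= T / 2) by apply Rmin_l. assert (hs2 : Rmin (T / 2) (d / 2) <= d / 2) by apply Rmin_r.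
  assert (hs0 : 0 < Rmin (T / 2) (d / 2)) by (apply Rmin_pos; lra).
  specialize (Hd' s ltac:(unfold s; lra) ltac:(unfold s; rewrite Rabs_left; lra)).
  assert (E 0 <= E s) by (apply Hopen; unfold s; lra). apply Rabs_def2 in Hd'. lra.
Qed.

Lemma final_arith (X X0 d Mc m : R) : 0 <= X -> d <= X0 -> 0 < d < 1 -> 0 <= Mc ->
  Mc * (4 * m + 3) <= d ^ 2 / 8 -> Mc <= d / 2 -> 0 < m ->
  X ^ 2 >= X0 ^ 2 - Mc * (4 * m + 2 * X + 2 * X0) -> d / 2 <= X.
Proof.
  intros. destruct (Rle_lt_dec (d / 2) X) as [h|h]. auto. exfalso.
  assert (h1 : (X0 - d) * (X0 + d - 2 * Mc) >= 0) by nra.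
  assert (h2 : X ^ 2 + 2 * Mc * X < d ^ 2 / 4 + Mc * d) by nra.
  assert (h3 : Mc * (4 * m + 3 * d) <= Mc * (4 * m + 3)) by nra.
  nra.
Qed.

Lemma final_arith1 (X X0 d Mc : R) : 0 <= X -> d <= X0 -> 0 < d -> 
  8 * Mc <= d ^ 2 / 2 -> X ^ 2 >= X0 ^ 2 - 8 * Mc -> d / 2 <= X.
Proof.
  intros. destruct (Rle_lt_dec (d / 2) X) as [h|h]. auto. exfalso. nra.
Qed.

Lemma Pb_le2 m l b : 0 < m -> 0 < l -> PI / 2 - rho m l b <= 2.
Proof. intros. assert (h := rho_nonneg m l b H H0). assert (PI <= 4) by apply PI_4. lra. Qed.

Lemma Pb_bound (m l b : R) : 0 < m -> 0 < l -> 0 < b -> 1 <= l ->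
  (PI / 2 - rho m l b) * sqrt (2 + l ^ 2) <= 2 * m + 2 * (b * sqrt (sqrt (2 + l ^ 2))).
Proof.
  intros hm hl hb hl1.
  set (J := sqrt (2 + l ^ 2)). set (sJ := sqrt J).
  assert (hJ2 : J ^ 2 = 2 + l ^ 2) by (unfold J; rewrite pow2_sqrt; nra).
  assert (hJ0 : 0 <= J) by apply sqrt_pos.
  assert (hsJ2 : sJ ^ 2 = J) by (unfold sJ; rewrite pow2_sqrt; lra).
  assert (hsJ0 : 0 <= sJ) by apply sqrt_pos.
  assert (hJl : l <= J) by nra. assert (hJl2 : J <= 2 * l) by nra.
  assert (h1 := pi2_minus_atan (r0c m l b) (r0c_pos m l b hm hl)). fold (rho m l b) in h1.
  assert (hw1 := wf_ge1 m l b hm hl). assert (hw2 := wf_sq m l b hm hl).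
  set (w := wf m l b) in *.
  assert (hr : / r0c m l b = m * (1 + w) / (2 * l)) by (unfold r0c; fold w; field; split; nra).
  rewrite hr in h1.
  assert (hw : w <= 1 + 2 * b * sJ / m).
  { assert (w ^ 2 <= (1 + 2 * b * sJ / m) ^ 2).
    { rewrite hw2. replace ((1 + 2 * b * sJ / m) ^ 2) with (1 + 4 * b * sJ / m + 4 * b ^ 2 * sJ ^ 2 / m ^ 2) by (field; lra).
      rewrite hsJ2. assert (0 <= 4 * b * sJ / m) by (apply Rdiv_le_0_compat; nra).
      assert (4 * b ^ 2 * l / m ^ 2 <= 4 * b ^ 2 * J / m ^ 2). { unfold Rdiv. apply Rmult_le_compat_r. left. apply Rinv_0_lt_compat. nra. nra. }
      lra. }
    assert (0 <= 2 * b * sJ / m) by (apply Rdiv_le_0_compat; nra). nra. }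
  apply Rle_trans with (m * (1 + w) / (2 * l) * J). apply Rmult_le_compat_r; auto.
  apply Rle_trans with (m * (1 + w)).
  { replace (m * (1 + w) / (2 * l) * J) with (m * (1 + w) * (J / (2 * l))) by (field; lra).
    rewrite <- (Rmult_1_r (m * (1 + w))) at 2. apply Rmult_le_compat_l. nra.
    apply (Rmult_le_reg_r (2 * l)). lra. unfold Rdiv. rewrite Rmult_assoc, Rinv_l by lra. lra. }
  replace (2 * m + 2 * (b * sJ)) with (m * (2 + 2 * b * sJ / m)) by (field; lra). 
  apply Rmult_le_compat_l; lra.
Qed.

Lemma deriv_ineq (m a lam Fv sg IGv g rp Mc K : R) :
  0 < m -> 0 < a -> 0 < lam -> 0 <= IGv -> 0 < g -> sg * sg = 1 -> Rabs Fv <= K * g -> 0 <= K ->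
  Rabs rp <= 2 * a / m -> Mc = 4 * lam * K -> 4 * lam * K / m <= 1 ->
  0 <= 2 * a * (lam * Fv * (sg * IGv)) + Mc * (sg * (a * (sg * IGv) * g - lam * Fv * (sg * IGv) * rp)).
Proof.
  intros hm ha hl hI hg hs hF hK hr hM hKm.
  replace (2 * a * (lam * Fv * (sg * IGv)) + Mc * (sg * (a * (sg * IGv) * g - lam * Fv * (sg * IGv) * rp)))
    with (2 * a * lam * IGv * (Fv * sg) + Mc * ((sg * sg) * (a * IGv * g)) - Mc * lam * IGv * (sg * sg) * (Fv * rp)) by ring.
  rewrite hs.
  assert (hsg : Rabs sg = 1). { assert (Rabs sg * Rabs sg = 1) by (rewrite <- Rabs_mult, hs; apply Rabs_R1). 
    assert (0 <= Rabs sg) by apply Rabs_pos. nra. }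
  assert (h1 : - (K * g) <= Fv * sg). { assert (Rabs (Fv * sg) <= K * g) by (rewrite Rabs_mult, hsg; lra). apply Rabs_le_between in H. lra. }
  assert (h2 : Fv * rp <= K * g * (2 * a / m)).
  { assert (Rabs (Fv * rp) <= K * g * (2 * a / m)). rewrite Rabs_mult. apply Rmult_le_compat; auto; apply Rabs_pos.
    apply Rabs_le_between in H. lra. }
  assert (h3 : 2 * a * lam * IGv * (Fv * sg) >= 2 * a * lam * IGv * (- (K * g))).
  { apply Rmult_ge_compat_l. apply Rle_ge. repeat apply Rmult_le_pos; lra. lra. }
  assert (hMc : 0 <= Mc) by nra.
  assert (h4 : Mc * lam * IGv * 1 * (Fv * rp) <= Mc * lam * IGv * (K * g * (2 * a / m))).
  { rewrite Rmult_1_r. apply Rmult_le_compat_l. repeat apply Rmult_le_pos; lra. lra. }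
  assert (h5 : Mc * lam * IGv * (K * g * (2 * a / m)) = (a * IGv * g) * (2 * Mc * lam * K / m)) by (field; lra).
  assert (h6 : 2 * Mc * lam * K / m <= Mc / 2).
  { rewrite hM. replace (2 * (4 * lam * K) * lam * K / m) with ((4 * lam * K) * (2 * lam * K / m)) by (field; lra).
    apply Rmult_le_compat_l. nra. replace (2 * lam * K / m) with ((4 * lam * K / m) / 2) by (field; lra). lra. }
  assert (h7 : 0 <= a * IGv * g) by (repeat apply Rmult_le_pos; lra).
  assert (h8 : (a * IGv * g) * (2 * Mc * lam * K / m) <= (a * IGv * g) * (Mc / 2)) by (apply Rmult_le_compat_l; lra).
  assert (h9 : 2 * a * lam * IGv * (- (K * g)) = - (a * IGv * g) * (Mc / 2)) by (rewrite hM; field).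
  nra.
Qed.

Theorem corollary4p2 (m lam C : R) :
  0 < m -> 0 < lam -> 0 < C ->
  exists c : R, 0 < c /\
    forall (T eps : R) (F : R -> R -> R),
      0 < T -> 0 < eps ->
      cont_on_strip T F ->
      (forall t r, 0 <= t <= T -> 0 < r ->
         Rabs (F t r) <= C * eps ^ 2 / (1 + r ^ 2 + t ^ 2)) ->
      forall delta : R, 0 < delta < 1 -> eps <= c * delta ^ 2 ->
      forall l : R, 0 < l ->
      forall th a : R -> R,
        cont_on_interval T th -> cont_on_interval T a ->
        (forall t, 0 <= t <= T -> 0 < a t) ->
        (forall t, 0 < t < T ->
           is_derive th t
             (- lam * F t (Rt m t l (th t) (a t)) * da_Rt m t l (th t) (a t))) ->
        (forall t, 0 < t < T ->
           is_derive a t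
             (lam * F t (Rt m t l (th t) (a t)) * dth_Rt m t l (th t) (a t))) ->
        inD delta (th 0) (a 0) l ->
        forall t, 0 <= t <= T -> inD (delta / 2) (th t) (a t) l.
Proof.
  intros hm hlam hC.
  set (N := 1 + 4 * lam * C / m + 64 * lam * C + 32 * lam * C * (4 * m + 3)).
  assert (hlC : 0 < lam * C) by nra. assert (hlCm : 0 < lam * C * m) by nra.
  assert (hN1 : 4 * lam * C / m <= N). { unfold N. assert (0 <= 4 * lam * C / m) by (apply Rdiv_le_0_compat; nra). nra. }
  assert (hN2 : 64 * lam * C <= N). { unfold N. assert (0 <= 4 * lam * C / m) by (apply Rdiv_le_0_compat; nra). nra. }
  assert (hN3 : 32 * lam * C * (4 * m + 3) <= N). { unfold N. assert (0 <= 4 * lam * C / m) by (apply Rdiv_le_0_compat; nra). nra. }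
  assert (hN : 1 <= N). { unfold N. assert (0 <= 4 * lam * C / m) by (apply Rdiv_le_0_compat; nra). nra. }
  exists (/ sqrt N). split. apply Rinv_0_lt_compat. apply sqrt_lt_R0. lra.
  intros T eps F hT heps Fc Fb delta [hd0 hd1] hec l hl th a thc ac apos thd ad hin t0 ht0.
  destruct hin as [ha0 [_ hin]].
  split. apply apos; auto. split. auto.
  assert (he2 : eps ^ 2 <= delta ^ 4 / N).
  { assert (hs : sqrt N ^ 2 = N) by (rewrite pow2_sqrt; lra).
    assert (0 < sqrt N) by (apply sqrt_lt_R0; lra).
    assert (eps ^ 2 <= (/ sqrt N * delta ^ 2) ^ 2) by (apply pow_incr; lra).
    replace ((/ sqrt N * delta ^ 2) ^ 2) with (delta ^ 4 / sqrt N ^ 2) in H0 by (field; lra).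
    now rewrite hs in H0. }
  set (u := fun s => th s + a s * s).
  set (r := fun s => Rfun m (u s) (a s) l).
  set (D := fun s => atan (r s) - rho m l (a s)).
  set (Q := fun s => sign (u s) * D s).
  set (Mc := 4 * lam * C * eps ^ 2).
  set (E := fun s => a s * a s + Mc * Q s).
  assert (Dz : forall s, 0 <= s <= T -> u s = 0 -> D s = 0).
  { intros s hs hu. unfold D, r. rewrite hu, Rfun_0 by (auto; apply apos; auto). unfold rho. ring. }
  assert (EE : E 0 <= E t0).
  { apply (mono E T hT); [ | | exact ht0].
    -
      intros t ht. assert (ht' : 0 <= t <= T) by lra. assert (hat := apos t ht').
      set (A := Acoef m l (u t) (a t)). set (B := Bcoef m l (u t) (a t)).
      assert (hA : dth_Rt m t l (th t) (a t) = A).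
      { unfold dth_Rt, Rt. apply is_derive_unique.
        assert (Du1 : is_derive (fun s => s + a t * t) (th t) (1 + 0)) by (apply dplus; [apply did | apply dconst]).
        assert (H := curve m l (fun s => s + a t * t) (fun _ => a t) (th t) (1 + 0) 0 hm hl Du1 (dconst _ _) hat).
        replace A with (Acoef m l (th t + a t * t) (a t) * (1 + 0) + Bcoef m l (th t + a t * t) (a t) * 0). exact H.
        unfold A, u. ring. }
      assert (hB : da_Rt m t l (th t) (a t) = A * t + B).
      { unfold da_Rt, Rt. apply is_derive_unique.
        assert (Du1 : is_derive (fun s => th t + s * t) (a t) (0 + (1 * t + a t * 0))).
        { apply (dplus (fun _ => th t) (fun s => s * t)). apply dconst. apply (dmult (fun s => s) (fun _ => t)). apply did. apply dconst. }
        assert (H := curve m l (fun s => th t + s * t) (fun s => s) (a t) _ 1 hm hl Du1 (did _) hat).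
        replace (A * t + B) with (Acoef m l (th t + a t * t) (a t) * (0 + (1 * t + a t * 0)) + Bcoef m l (th t + a t * t) (a t) * 1). exact H.
        unfold A, B, u. ring. }
      assert (Dth := thd t ht). assert (Da := ad t ht).
      change (Rt m t l (th t) (a t)) with (r t) in Dth, Da.
      rewrite hA in Da. rewrite hB in Dth. set (Fv := F t (r t)) in *.
      assert (Du : is_derive u t (- lam * Fv * (A * t + B) + (lam * Fv * A * t + a t * 1))).
      { apply (dplus th (fun s => a s * s)). auto. apply (dmult a (fun s => s)); auto. apply did. }
      assert (Dr : is_derive r t (a t * A)).
      { assert (H := curve m l u a t _ _ hm hl Du Da hat). fold A B in H.
        replace (a t * A) with (A * (- lam * Fv * (A * t + B) + (lam * Fv * A * t + a t * 1)) + B * (lam * Fv * A)) by ring.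
        exact H. }
      assert (DD : is_derive D t (a t * A * / (1 + (r t)²) - lam * Fv * A * rhod m l (a t))).
      { apply (dminus (fun s => atan (r s)) (fun s => rho m l (a s))).
        apply (dcomp atan r). apply is_derive_atan. auto.
        apply (dcomp (rho m l) a). apply rho_derive; auto. auto. }
      assert (DE0 : forall dQ, is_derive Q t dQ -> is_derive E t (lam * Fv * A * a t + a t * (lam * Fv * A) + (0 * Q t + Mc * dQ))).
      { intros dQ DQ. apply (dplus (fun s => a s * a s) (fun s => Mc * Q s)). apply dmult; auto.
        apply (dmult (fun _ => Mc) Q). apply dconst. auto. }
      destruct (Req_dec (u t) 0) as [hu|hu].
      + assert (hA0 : A = 0) by (unfold A, Acoef; rewrite hu, sign_0; ring).
        assert (DD' : is_derive D t 0).
        { replace 0 with (a t * A * / (1 + (r t)²) - lam * Fv * A * rhod m l (a t)) by (rewrite hA0; ring). auto. }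
        assert (DQ : is_derive Q t 0).
        { apply (qz Q D t DD'). apply Dz; auto. unfold Q. rewrite hu, sign_0. ring.
          intros s. unfold Q. rewrite Rabs_mult. assert (h := sign_abs_le (u s)). assert (0 <= Rabs (D s)) by apply Rabs_pos. nra. }
        eexists. split. 2: apply (DE0 0 DQ). rewrite hA0. lra.
      + set (sg := sign (u t)).
        assert (Hloc : locally t (fun s => sg * D s = Q s)).
        { pose proof (proj1 (limR _ _ _) (deriv_cont u t _ Du) (Rabs (u t)) ltac:(apply Rabs_pos_lt; auto)) as H.
          revert H. apply filter_imp. intros s hs. unfold Q, sg. f_equal.
          destruct (Rtotal_order (u t) 0) as [h|[h|h]].
          rewrite (Rabs_left (u t)) in hs by auto. apply Rabs_def2 in hs. rewrite !sign_eq_m1 by lra. auto.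
          contradiction.
          rewrite (Rabs_right (u t)) in hs by lra. apply Rabs_def2 in hs. rewrite !sign_eq_1 by lra. auto. }
        assert (DQ : is_derive Q t (0 * D t + sg * (a t * A * / (1 + (r t)²) - lam * Fv * A * rhod m l (a t)))).
        { apply (is_derive_ext_loc (fun s => sg * D s)). auto. apply (dmult (fun _ => sg) D). apply dconst. auto. }
        eexists. split. 2: apply (DE0 _ DQ).
        set (IGv := IG (kappa m (a t) l) (Xf m l (u t) (a t))).
        assert (hAe : A = sg * IGv) by reflexivity.
        assert (hI : 0 <= IGv).
        { apply IG_nonneg. apply kappa_bounds; auto. apply Hk_spec. apply kappa_bounds; auto.
          apply Rdiv_le_0_compat. apply Rabs_pos. apply pp_pos; auto. }
        assert (hr0 : 0 < r t) by (eapply Rlt_le_trans; [apply (r0c_pos m l (a t) hm hl) | apply Rfun_ge; auto]).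
        assert (hg : 0 < / (1 + (r t)²)) by (apply Rinv_0_lt_compat; assert (0 <= (r t)²) by apply Rle_0_sqr; lra).
        assert (hF : Rabs Fv <= C * eps ^ 2 * / (1 + (r t)²)).
        { eapply Rle_trans. apply Fb; auto. unfold Rdiv. apply Rmult_le_compat_l. nra.
          apply Rinv_le_contravar. assert (0 <= (r t)²) by apply Rle_0_sqr. lra. unfold Rsqr. nra. }
        assert (hrp := rho_bound m l (a t) hm hl ltac:(lra)). fold (rhod m l (a t)) in hrp.
        assert (hK : 4 * lam * (C * eps ^ 2) / m <= 1).
        { assert (eps ^ 2 <= 1 / N). { eapply Rle_trans. apply he2. unfold Rdiv. apply Rmult_le_compat_r.
            left. apply Rinv_0_lt_compat. lra. assert (delta ^ 4 <= 1). { assert (0 < delta ^ 2) by nra. assert (delta ^ 2 <= 1) by nra. replace (delta ^ 4) with (delta ^ 2 * delta ^ 2) by ring. nra. } lra. }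
          replace (4 * lam * (C * eps ^ 2) / m) with ((4 * lam * C / m) * eps ^ 2) by (field; lra).
          assert (0 <= 4 * lam * C / m) by (apply Rdiv_le_0_compat; nra).
          apply Rle_trans with ((4 * lam * C / m) * (1 / N)). apply Rmult_le_compat_l; auto.
          replace (4 * lam * C / m * (1 / N)) with ((4 * lam * C / m) / N) by (field; lra).
          apply (Rmult_le_reg_r N). lra. unfold Rdiv at 1. rewrite Rmult_assoc, Rinv_l by lra. lra. }
        assert (H := deriv_ineq m (a t) lam Fv sg IGv (/ (1 + (r t)²)) (rhod m l (a t)) Mc (C * eps ^ 2)
                   hm hat hlam hI hg (sign_sq (u t) hu) hF ltac:(nra) hrp ltac:(unfold Mc; ring) hK).
        rewrite hAe. 
        replace (lam * Fv * (sg * IGv) * a t + a t * (lam * Fv * (sg * IGv)) +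
          (0 * Q t + Mc * (0 * D t + sg * (a t * (sg * IGv) * / (1 + (r t)²) - lam * Fv * (sg * IGv) * rhod m l (a t)))))
          with (2 * a t * (lam * Fv * (sg * IGv)) + Mc * (sg * (a t * (sg * IGv) * / (1 + (r t)²) - lam * Fv * (sg * IGv) * rhod m l (a t)))) by ring.
        exact H.
    -
      intros t ht. set (Fw := within (fun s => 0 <= s <= T) (locally t)).
      assert (Hid : filterlim (fun s => s) Fw (locally t)).
      { apply (proj2 (limR Fw _ _)). intros e He. exists (mkposreal e He). intros s B _. exact B. }
      assert (Ha : filterlim a Fw (locally (a t))) by (apply ac; auto).
      assert (Hth : filterlim th Fw (locally (th t))) by (apply thc; auto).
      assert (hat := apos t ht).
      assert (Hu : filterlim u Fw (locally (u t))).
      { unfold u. apply lim_plus; try exact _; auto. apply lim_mult; try exact _; auto. }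
      assert (Hr : filterlim r Fw (locally (r t))).
      { unfold r. apply (Rfun_lim Fw m l u a); auto. }
      assert (HD : filterlim D Fw (locally (D t))).
      { unfold D. apply lim_minus; try exact _.
        apply (lim_cont Fw r atan); auto. apply (ex_derive_continuous atan). eexists. apply is_derive_atan.
        apply (lim_cont Fw a (rho m l)); auto. apply (ex_derive_continuous (rho m l)). eexists. apply rho_derive; auto. }
      assert (HQ : filterlim Q Fw (locally (Q t))).
      { unfold Q. apply sgnlim; try exact _; auto. }
      unfold E. apply lim_plus; try exact _. apply lim_mult; try exact _; auto.
      apply lim_mult; try exact _; auto. apply filterlim_const. }
  assert (HQ : forall s, 0 <= s <= T -> Rabs (Q s) <= PI / 2 - rho m l (a s)).
  { intros s hs. assert (has := apos s hs).
    assert (hrg := Rfun_ge m (u s) (a s) l hm hl has). fold (r s) in hrg.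
    assert (hD0 : 0 <= D s).
    { unfold D, rho. destruct (Rle_lt_or_eq_dec _ _ hrg) as [h|h].
      assert (atan (r0c m l (a s)) < atan (r s)) by (apply atan_increasing; auto). lra. rewrite h. lra. }
    assert (hD1 : D s <= PI / 2 - rho m l (a s)).
    { unfold D. destruct (atan_bound (r s)). lra. }
    unfold Q. rewrite Rabs_mult. rewrite (Rabs_right (D s)) by lra.
    assert (h := sign_abs_le (u s)). assert (0 <= Rabs (sign (u s))) by apply Rabs_pos. nra. }
  assert (hQ0 := HQ 0 ltac:(lra)). assert (hQt := HQ t0 ht0).
  apply Rabs_le_between in hQ0. apply Rabs_le_between in hQt.
  assert (hMc : 0 <= Mc) by (unfold Mc; nra).
  assert (hat := apos t0 ht0).
  assert (Hsq : a t0 * a t0 >= a 0 * a 0 - Mc * ((PI / 2 - rho m l (a t0)) + (PI / 2 - rho m l (a 0)))).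
  { unfold E in EE. nra. }
  unfold jap in *. set (J := sqrt (2 + l ^ 2)) in *. set (sJ := sqrt J) in *.
  assert (hJ2 : J ^ 2 = 2 + l ^ 2) by (unfold J; rewrite pow2_sqrt; nra).
  assert (hJ0 : 0 <= J) by apply sqrt_pos.
  assert (hsJ2 : sJ ^ 2 = J) by (unfold sJ; rewrite pow2_sqrt; lra).
  assert (hsJ0 : 0 <= sJ) by apply sqrt_pos.
  assert (hMcd : Mc <= 4 * lam * C * (delta ^ 4 / N)) by (unfold Mc; apply Rmult_le_compat_l; [nra | exact he2]).
  assert (hd4 : delta ^ 4 <= delta ^ 2) by (assert (0 < delta ^ 2) by nra; assert (delta ^ 2 <= 1) by nra; replace (delta ^ 4) with (delta ^ 2 * delta ^ 2) by ring; nra).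
  assert (hX : 0 <= a t0 * sJ) by nra.
  apply Rle_ge. destruct (Rle_lt_dec l 1) as [hl1|hl1].
  - assert (hJ : J <= 2) by nra.
    assert (hp1 := Pb_le2 m l (a t0) hm hl). assert (hp0 := Pb_le2 m l (a 0) hm hl).
    apply (final_arith1 (a t0 * sJ) (a 0 * sJ) delta Mc hX ltac:(lra) hd0).
    + assert (4 * lam * C * (delta ^ 4 / N) <= delta ^ 4 / 16).
      { unfold Rdiv. replace (4 * lam * C * (delta ^ 4 * / N)) with (delta ^ 4 * (4 * lam * C / N)) by (field; lra).
        apply Rmult_le_compat_l. nra. apply (Rmult_le_reg_r N). lra. unfold Rdiv. rewrite Rmult_assoc, Rinv_l by lra. lra. }
      nra.
    + replace ((a t0 * sJ) ^ 2) with (a t0 * a t0 * J) by (rewrite <- hsJ2; ring).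
      replace ((a 0 * sJ) ^ 2) with (a 0 * a 0 * J) by (rewrite <- hsJ2; ring).
      assert (h2 : Mc * (PI / 2 - rho m l (a t0) + (PI / 2 - rho m l (a 0))) <= Mc * 4) by (apply Rmult_le_compat_l; lra).
      assert (h1 : a t0 * a t0 >= a 0 * a 0 - 4 * Mc) by lra.
      assert (h3 : a t0 * a t0 * J >= (a 0 * a 0 - 4 * Mc) * J) by (apply Rmult_ge_compat_r; lra).
      assert (h4 : 4 * Mc * J <= 8 * Mc) by nra. nra.
  - assert (hp1 := Pb_bound m l (a t0) hm hl hat ltac:(lra)). assert (hp0 := Pb_bound m l (a 0) hm hl ha0 ltac:(lra)).
    fold J sJ in hp1, hp0.
    apply (final_arith (a t0 * sJ) (a 0 * sJ) delta Mc m hX ltac:(lra) ltac:(lra) hMc).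
    + assert (4 * lam * C * (delta ^ 4 / N) * (4 * m + 3) <= delta ^ 4 / 8).
      { unfold Rdiv. replace (4 * lam * C * (delta ^ 4 * / N) * (4 * m + 3)) with (delta ^ 4 * (4 * lam * C * (4 * m + 3) / N)) by (field; lra).
        apply Rmult_le_compat_l. nra. apply (Rmult_le_reg_r N). lra. unfold Rdiv. rewrite Rmult_assoc, Rinv_l by lra. lra. }
      assert (Mc * (4 * m + 3) <= 4 * lam * C * (delta ^ 4 / N) * (4 * m + 3)) by (apply Rmult_le_compat_r; lra).
      nra.
    + assert (4 * lam * C * (delta ^ 4 / N) <= delta ^ 4 / 16).
      { unfold Rdiv. replace (4 * lam * C * (delta ^ 4 * / N)) with (delta ^ 4 * (4 * lam * C / N)) by (field; lra).
        apply Rmult_le_compat_l. nra. apply (Rmult_le_reg_r N). lra. unfold Rdiv. rewrite Rmult_assoc, Rinv_l by lra. lra. }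
      nra.
    + auto.
    + replace ((a t0 * sJ) ^ 2) with (a t0 * a t0 * J) by (rewrite <- hsJ2; ring).
      replace ((a 0 * sJ) ^ 2) with (a 0 * a 0 * J) by (rewrite <- hsJ2; ring).
      assert (Mc * ((PI / 2 - rho m l (a t0)) + (PI / 2 - rho m l (a 0))) * J <= Mc * (4 * m + 2 * (a t0 * sJ) + 2 * (a 0 * sJ))).
      { rewrite Rmult_assoc. apply Rmult_le_compat_l; auto. lra. }
      nra.
Qed.
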